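(* Let $d\in\{1,2\}$ and $\mathcal U$ a supercritical update family. There exist $u\in S^{d-1}$, a nonempty set $R\subset\mathbb Z^d$ of the form - if $d=1$: $R=[0,a_1u[\,\cap\,\mathbb Z$ with $a_1>0$ and $a_1u\in\mathbb Z$; - if $d=2$: $R=([0,a_1[\,u+[0,a_2]u^\perp)\cap\mathbb Z^2$ with $a_1>0$, $a_2\ge0$, $a_1u\in\mathbb Z^2$, where $u^\perp$ is a unit vector orthogonal to $u$, and a finite sequence of sites $x_1,\dots,x_p$ in $(a_1u+R)\cup(2a_1u+R)$ such that the following holds for the KCM with update family $\mathcal U$ (any parameter $q$): if at some time $s$ all sites of $R$ are at $0$, and there are times $s<s_1<\dots<s_p$ with $s_i\in\mathcal P^0_{x_i}$ for all $i$, and there is no 1-clock ring at any site of $R\cup\{x_1,\dots,x_p\}$ during $]s,s_p]$, then at time $s_p$ all sites of $a_1u+R$ are at $0$.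
   Context: Update family $\mathcal U$: finite collection of finite nonempty subsets of $\mathbb Z^d\setminus\{0\}$; $u\in S^{d-1}$ is stable if no $X\in\mathcal U$ lies in $\{x:\langle x,u\rangle<0\}$; supercritical means some open hemisphere of $S^{d-1}$ contains no stable direction (for $d=1$ this means some direction in $\{-1,1\}$ is unstable). KCM with parameter $q$ via Harris construction: independent Poisson processes $\mathcal P^0_x$ (rate $q$, 0-clock rings) and $\mathcal P^1_x$ (rate $1-q$, 1-clock rings) at each site; at a ring at $x$, if some $x+X$ ($X\in\mathcal U$) is all $0$ just before, $x$ is set to $0$ (for a 0-clock ring) or $1$ (for a 1-clock ring); otherwise no change. *)

(* Defs.v *)
From Stdlib Require Import Reals List ZArith.
From Stdlib Require Fin.
Import ListNotations.
Open Scope R_scope.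

Definition site (d : nat) := Fin.t d -> Z.
Definition vec (d : nat) := Fin.t d -> R.

Fixpoint sumF (d : nat) : (Fin.t d -> R) -> R :=
  match d return (Fin.t d -> R) -> R with
  | O => fun _ => 0
  | S n => fun f => f Fin.F1 + sumF n (fun i => f (Fin.FS i))
  end.

Definition dot (d : nat) (u v : vec d) : R := sumF d (fun i => u i * v i).

Definition toR (d : nat) (x : site d) : vec d := fun i => IZR (x i).

Definition sadd (d : nat) (x y : site d) : site d := fun i => (x i + y i)%Z.
Definition sscale (d : nat) (k : Z) (x : site d) : site d := fun i => (k * x i)%Z.

Definition unit_vec (d : nat) (u : vec d) : Prop := dot d u u = 1.

(** An update family: a finite collection (list) of finite (list) nonempty
    subsets of Z^d \ {0}. *)
Definition update_family (d : nat) (U : list (list (site d))) : Prop :=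
  (forall X, In X U -> X <> []) /\
  (forall X x, In X U -> In x X -> exists i, x i <> 0%Z).

Definition stable (d : nat) (U : list (list (site d))) (u : vec d) : Prop :=
  unit_vec d u /\
  ~ (exists X, In X U /\ forall x, In x X -> dot d (toR d x) u < 0).

Definition supercritical (d : nat) (U : list (list (site d))) : Prop :=
  exists v : vec d, unit_vec d v /\
    forall u : vec d, unit_vec d u -> dot d u v > 0 -> ~ stable d U u.

Inductive spin := Zero | One.

Definition trajectory (d : nat) := R -> site d -> spin.
Definition clocks (d : nat) := site d -> R -> Prop.

Definition constraint_before (d : nat) (U : list (list (site d)))
    (eta : trajectory d) (x : site d) (t : R) : Prop :=
  exists X, In X U /\ exists eps, eps > 0 /\
    forall t', t - eps < t' < t -> forall y, In y X -> eta t' (sadd d x y) = Zero.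

Definition unchanged_at (d : nat) (eta : trajectory d) (x : site d) (t : R) : Prop :=
  exists eps, eps > 0 /\ forall t', t - eps < t' < t -> eta t' x = eta t x.

(** Pathwise description of the Harris graphical construction of the KCM
    with update family U driven by the 0-clocks P0 and 1-clocks P1
    (for almost every realisation: locally finite, disjoint clocks). *)
Definition harris_kcm (d : nat) (U : list (list (site d)))
    (P0 P1 : clocks d) (eta : trajectory d) : Prop :=
  (forall x a b, exists l : list R,
      forall t, a <= t <= b -> (P0 x t \/ P1 x t) -> In t l) /\
  (forall x t, ~ (P0 x t /\ P1 x t)) /\
  (forall x s t, s <= t ->
      (forall r, s < r <= t -> ~ P0 x r /\ ~ P1 x r) -> eta t x = eta s x) /\
  (forall x t, P0 x t ->
      (constraint_before d U eta x t -> eta t x = Zero) /\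
      (~ constraint_before d U eta x t -> unchanged_at d eta x t)) /\
  (forall x t, P1 x t ->
      (constraint_before d U eta x t -> eta t x = One) /\
      (~ constraint_before d U eta x t -> unchanged_at d eta x t)).

Fixpoint incr_from (s : R) (ts : list R) : Prop :=
  match ts with
  | [] => True
  | t :: r => s < t /\ incr_from t r
  end.

Definition R_shape (d : nat) (u : vec d) (a1 : R) (Rset : site d -> Prop) : Prop :=
  (d = 1%nat ->
     forall x, Rset x <-> exists t, 0 <= t < a1 /\ forall i, toR d x i = t * u i) /\
  (d = 2%nat ->
     exists (uperp : vec d) (a2 : R),
       unit_vec d uperp /\ dot d u uperp = 0 /\ 0 <= a2 /\
       forall x, Rset x <-> exists t s, 0 <= t < a1 /\ 0 <= s <= a2 /\
                   forall i, toR d x i = t * u i + s * uperp i).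

(* Main.v *)
Require Import Defs.
From Stdlib Require Import Reals List ZArith Lia Lra Psatz ClassicalEpsilon Classical FunctionalExtensionality.
From Stdlib Require Fin.
Import ListNotations.
Open Scope R_scope.


Definition Pb (P : Prop) : bool := if excluded_middle_informative P then true else false.
Lemma Pb_true P : Pb P = true <-> P.
Proof. unfold Pb; destruct (excluded_middle_informative P); split; intuition; discriminate. Qed.
Lemma Pb_false P : Pb P = false <-> ~ P.
Proof. unfold Pb; destruct (excluded_middle_informative P); split; intuition; discriminate. Qed.

Lemma filter_le {A} (p q : A -> bool) l : (forall a, p a = true -> q a = true) ->
  (length (filter p l) <= length (filter q l))%nat.
Proof.
  intros Hpq; induction l as [|a l IH]; simpl; [lia|].
  destruct (p a) eqn:E1; [rewrite (Hpq a E1); simpl; lia|].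
  destruct (q a); simpl; lia.
Qed.

Lemma filter_lt {A} (p q : A -> bool) l e : (forall a, p a = true -> q a = true) ->
  In e l -> q e = true -> p e = false -> (length (filter p l) < length (filter q l))%nat.
Proof.
  intros Hpq; induction l as [|a l IH]; simpl; [tauto|].
  intros [<-|Hin] Hq Hp.
  - rewrite Hp, Hq; simpl. pose proof (filter_le p q l Hpq); lia.
  - specialize (IH Hin Hq Hp).
    destruct (p a) eqn:E1; [rewrite (Hpq a E1); simpl; lia|].
    destruct (q a); simpl; lia.
Qed.

Lemma fold_max_in r0 l : In (fold_right Rmax r0 l) (r0 :: l).
Proof.
  induction l as [|a l IH]; [simpl; auto|].
  change (fold_right Rmax r0 (a :: l)) with (Rmax a (fold_right Rmax r0 l)).
  destruct (Rle_dec a (fold_right Rmax r0 l)).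
  - rewrite Rmax_right by lra. destruct IH as [E|E]; [left; congruence| right; right; auto].
  - rewrite Rmax_left by lra. right; left; auto.
Qed.

Lemma fold_max_ge r0 l : forall x, In x (r0 :: l) -> x <= fold_right Rmax r0 l.
Proof.
  induction l as [|a l IH]; intros x Hx.
  - simpl in *. destruct Hx as [E|[]]; subst; lra.
  - change (fold_right Rmax r0 (a :: l)) with (Rmax a (fold_right Rmax r0 l)).
    pose proof (Rmax_l a (fold_right Rmax r0 l)).
    pose proof (Rmax_r a (fold_right Rmax r0 l)).
    destruct Hx as [E|[E|Hx]].
    + subst. pose proof (IH x (or_introl eq_refl)). lra.
    + subst. lra.
    + pose proof (IH x (or_intror Hx)). lra.
Qed.

Lemma persist d U P0 P1 eta (H : harris_kcm d U P0 P1 eta) x a b :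
  eta a x = Zero -> (forall r, a < r <= b -> ~ P1 x r) ->
  forall t, a <= t <= b -> eta t x = Zero.
Proof.
  intros Ha HP1.
  destruct H as [Hfin [Hdisj [Hconst [H0 H1]]]].
  destruct (Hfin x a b) as [l Hl].
  set (F := fun t => filter (fun r => Pb (a < r <= t /\ P0 x r)) l).
  assert (Hmain : forall n t, a <= t <= b -> (length (F t) <= n)%nat -> eta t x = Zero).
  2:{ intros t Ht; apply (Hmain _ t Ht (le_n _)). }
  induction n as [|n IH]; intros t Ht Hn.
  - destruct (F t) as [|r0 Ft] eqn:EF.
    + assert (Hno : forall r, a < r <= t -> ~ P0 x r /\ ~ P1 x r).
      { intros r Hr; split; [|apply HP1; lra].
        intro HP; assert (In r (F t)) by (apply filter_In; split;
          [apply Hl; [lra|auto] | apply Pb_true; split; [lra|auto]]); rewrite EF in H; exact H. }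
      rewrite (Hconst x a t) by (auto; lra). exact Ha.
    + simpl in Hn; lia.
  - destruct (F t) as [|r0 Ft] eqn:EF.
    + assert (Hno : forall r, a < r <= t -> ~ P0 x r /\ ~ P1 x r).
      { intros r Hr; split; [|apply HP1; lra].
        intro HP; assert (In r (F t)) by (apply filter_In; split;
          [apply Hl; [lra|auto] | apply Pb_true; split; [lra|auto]]); rewrite EF in H; exact H. }
      rewrite (Hconst x a t) by (auto; lra). exact Ha.
    + set (r := fold_right Rmax r0 Ft).
      assert (Hrin : In r (F t)) by (rewrite EF; apply fold_max_in).
      assert (Hrge : forall q, In q (F t) -> q <= r) by (rewrite EF; apply fold_max_ge).
      pose proof Hrin as Hr'. unfold F in Hr'. apply filter_In in Hr'. destruct Hr' as [Hrl Hrp].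
      assert (Hrp2 : a < r <= t /\ P0 x r) by (apply (proj1 (Pb_true _)); exact Hrp). destruct Hrp2 as [Hrr HP0r].
      assert (Etr : eta t x = eta r x).
      { apply Hconst; [lra|]. intros q Hq; split; [|apply HP1; lra].
        intro HP. assert (In q (F t)) by (apply filter_In; split;
          [apply Hl; [lra|auto] | apply Pb_true; split; [lra|auto]]).
        specialize (Hrge q H); lra. }
      rewrite Etr.
      destruct (H0 x r HP0r) as [Hc Hu].
      destruct (classic (constraint_before d U eta x r)) as [C|C]; [apply Hc; auto|].
      destruct (Hu C) as [eps [Heps Heq]].
      set (t' := Rmax (r - eps/2) ((a + r)/2)).
      assert (Ht'1 : r - eps < t' < r).
      { unfold t'; unfold Rmax; destruct (Rle_dec _ _); lra. }
      assert (Ht'2 : a < t').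
      { unfold t'; pose proof (Rmax_r (r - eps/2) ((a + r)/2)); lra. }
      rewrite <- (Heq t' Ht'1).
      apply IH; [lra|].
      assert (Hlt : (length (F t') < length (F t))%nat).
      { apply (filter_lt _ _ l r).
        - intros q Hq. pose proof (proj1 (Pb_true _) Hq) as Hq'. apply (proj2 (Pb_true _)). split; [lra|tauto].
        - auto.
        - apply (proj2 (Pb_true _)); split; [lra|auto].
        - apply (proj2 (Pb_false _)); lra. }
      rewrite EF in Hlt; simpl in Hlt, Hn. lia.
Qed.

Definition rank {A} (Th : A -> R) (L : list A) (x : A) : nat :=
  length (filter (fun z => Pb (Th z < Th x)) L).

Lemma rank_lt {A} (Th : A -> R) L x y : In y L -> Th y < Th x -> (rank Th L y < rank Th L x)%nat.
Proof.
  intros Hy Hlt. unfold rank. apply (filter_lt _ _ L y); auto.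
  - intros a Ha. apply (proj2 (Pb_true _)). pose proof (proj1 (Pb_true _) Ha). lra.
  - apply (proj2 (Pb_true _)); auto.
  - apply (proj2 (Pb_false _)); lra.
Qed.

Lemma filter_all {A} (l : list A) : filter (fun _ => true) l = l.
Proof. induction l; simpl; congruence. Qed.

Lemma rank_bound {A} (Th : A -> R) L x : In x L -> (rank Th L x < length L)%nat.
Proof.
  intros Hx. unfold rank. rewrite <- (filter_all L) at 2.
  apply (filter_lt _ _ L x); auto.
  apply (proj2 (Pb_false _)); lra.
Qed.

Lemma last_cons (a : R) l d : last (a :: l) d = last l a.
Proof.
  revert a d; induction l as [|b l IH]; intros a d; [reflexivity|].
  change (last (a :: b :: l) d) with (last (b :: l) d).
  rewrite IH. change (last (b :: l) a) with (last (b :: l) a). rewrite IH. reflexivity.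
Qed.

Lemma incr_last_ge t0 ts : incr_from t0 ts -> t0 <= last ts t0.
Proof.
  revert t0; induction ts as [|a ts IH]; intros t0 H; [simpl; lra|].
  rewrite last_cons. simpl in H. destruct H as [H1 H2]. specialize (IH a H2). lra.
Qed.

Lemma incr_app t0 a b : incr_from t0 (a ++ b) -> incr_from t0 a /\ incr_from (last a t0) b.
Proof.
  revert t0; induction a as [|x a IH]; intros t0 H; [simpl in *; auto|].
  simpl in H. destruct H as [H1 H2]. rewrite last_cons. destruct (IH x H2). simpl; auto.
Qed.

Lemma last_app (a b : list R) t0 : last (a ++ b) t0 = last b (last a t0).
Proof.
  revert t0; induction a as [|x a IH]; intros t0; [reflexivity|].
  change ((x :: a) ++ b) with (x :: (a ++ b)).
  rewrite !last_cons, IH. reflexivity.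
Qed.

Section DynSec.
Context (d : nat) (U : list (list (site d))) (P0 P1 : clocks d) (eta : trajectory d)
  (H : harris_kcm d U P0 P1 eta) (Rs : site d -> Prop) (L : list (site d)) (Th : site d -> R)
  (HdepL : forall x, In x L -> exists X, In X U /\ forall y, In y X ->
      Rs (sadd d x y) \/ (In (sadd d x y) L /\ Th (sadd d x y) < Th x))
  (s T : R) (HRs : forall y, Rs y -> forall t, s <= t <= T -> eta t y = Zero)
  (HPL : forall x, In x L -> forall r, s < r <= T -> ~ P1 x r).

Lemma seg r : forall ys us t0 (Q : site d -> Prop), (forall x, Q x -> In x L) ->
  (forall x, In x L -> (rank Th L x < r)%nat -> Q x) -> (forall x, Q x -> eta t0 x = Zero) ->
  incl ys L -> Forall2 (fun x t => P0 x t) ys us -> incr_from t0 us -> s <= t0 -> last us t0 <= T ->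
  forall x, (Q x \/ (In x ys /\ (rank Th L x <= r)%nat)) -> eta (last us t0) x = Zero.
Proof.
  induction ys as [|y ys IH]; intros us t0 Q HQL HrQ HQ0 Hinc HF Hincr Hs HT x Hx.
  - inversion HF; subst. simpl in *. destruct Hx as [Hx|[[] _]]; auto.
  - inversion HF as [|? t1 ? us' HP0 HF']; subst.
    simpl in Hincr. destruct Hincr as [Ht01 Hincr'].
    rewrite last_cons in HT |- *.
    pose proof (incr_last_ge _ _ Hincr') as Hge.
    assert (HyL : In y L) by (apply Hinc; left; auto).
    assert (Hpers : forall z, In z L -> eta t0 z = Zero -> forall t, t0 <= t <= T -> eta t z = Zero).
    { intros z Hz Hz0 t Ht. apply (persist d U P0 P1 eta H z t0 T Hz0); [|lra].
      intros q Hq; apply HPL; auto; lra. }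
    assert (Hy1 : (rank Th L y <= r)%nat -> eta t1 y = Zero).
    { intros Hry. destruct H as [_ [_ [_ [H0 _]]]]. apply (proj1 (H0 y t1 HP0)).
      destruct (HdepL y HyL) as [X [HX HXy]]. exists X; split; auto.
      exists (t1 - t0); split; [lra|]. intros t' Ht' q Hq.
      destruct (HXy q Hq) as [HR|[HzL HTh]].
      - apply HRs; auto; lra.
      - apply (Hpers _ HzL); [|lra]. apply HQ0, HrQ; auto.
        pose proof (rank_lt Th L y (sadd d y q) HzL HTh). lia. }
    apply (IH us' t1 (fun z => Q z \/ (z = y /\ (rank Th L y <= r)%nat))); auto.
    + intros z [Hz|[-> _]]; auto.
    + intros z [Hz|[-> Hr]]; [|auto]. apply (Hpers z (HQL z Hz) (HQ0 z Hz)); lra.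
    + intros z Hz; apply Hinc; right; auto.
    + lra.
    + destruct Hx as [Hx|[[->|Hx] Hr]]; auto.
Qed.

Lemma rounds : forall K r ts t0, Forall2 (fun x t => P0 x t) (concat (repeat L K)) ts ->
  incr_from t0 ts -> s <= t0 -> last ts t0 <= T ->
  (forall x, In x L -> (rank Th L x < r)%nat -> eta t0 x = Zero) ->
  forall x, In x L -> (rank Th L x < r + K)%nat -> eta (last ts t0) x = Zero.
Proof.
  induction K as [|K IH]; intros r ts t0 HF Hincr Hs HT Hinv x Hx Hr.
  - simpl in HF. inversion HF; subst. simpl. apply Hinv; auto; lia.
  - simpl in HF. apply Forall2_app_inv_l in HF. destruct HF as [l1 [l2 [HF1 [HF2 ->]]]].
    apply incr_app in Hincr. destruct Hincr as [Hi1 Hi2].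
    rewrite last_app in HT |- *.
    pose proof (incr_last_ge _ _ Hi2).
    pose proof (incr_last_ge _ _ Hi1).
    apply (IH (S r) l2 (last l1 t0)); auto; [lra| |lia].
    intros z Hz Hrz.
    apply (seg r L l1 t0 (fun z => In z L /\ (rank Th L z < r)%nat)); auto.
    + intros q [? ?]; auto.
    + intros q [? ?]; auto.
    + intros q q'; auto.
    + lra.
    + destruct (Nat.lt_ge_cases (rank Th L z) r); [left; auto | right; split; [auto|lia]].
Qed.

End DynSec.

Lemma in_concat_repeat {A} (L : list A) K x : In x L -> (0 < K)%nat -> In x (concat (repeat L K)).
Proof. intros Hx HK. destruct K; [lia|]. simpl. apply in_or_app; auto. Qed.

Lemma dyn_main d U P0 P1 eta (H : harris_kcm d U P0 P1 eta) (Rs : site d -> Prop)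
  (L : list (site d)) (Th : site d -> R)
  (HdepL : forall x, In x L -> exists X, In X U /\ forall y, In y X ->
      Rs (sadd d x y) \/ (In (sadd d x y) L /\ Th (sadd d x y) < Th x))
  (s : R) (ts : list R) :
  incr_from s ts ->
  Forall2 (fun x t => P0 x t) (concat (repeat L (length L))) ts ->
  (forall y, Rs y -> eta s y = Zero) ->
  (forall x r, (Rs x \/ In x (concat (repeat L (length L)))) -> s < r <= last ts s -> ~ P1 x r) ->
  forall x, In x L -> eta (last ts s) x = Zero.
Proof.
  intros Hincr HF HR0 HP1 x Hx.
  pose proof (incr_last_ge _ _ Hincr) as Hge.
  assert (HRs : forall y, Rs y -> forall t, s <= t <= last ts s -> eta t y = Zero).
  { intros y Hy t Ht. refine (persist d U P0 P1 eta H y s (last ts s) (HR0 y Hy) _ t Ht).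
    intros r Hr; apply HP1; auto. }
  assert (HPL : forall x, In x L -> forall r, s < r <= last ts s -> ~ P1 x r).
  { intros z Hz r Hr. apply HP1; auto. right. apply in_concat_repeat; auto.
    destruct L; [destruct Hz|simpl; lia]. }
  apply (rounds d U P0 P1 eta H Rs L Th HdepL s (last ts s) HRs HPL (length L) 0 ts s); auto; try lra.
  - intros; lia.
  - simpl. apply rank_bound; auto.
Qed.


Lemma fin1 (i : Fin.t 1) : i = Fin.F1.
Proof.
  pattern i; apply Fin.caseS'; [reflexivity|].
  intro q; apply (Fin.case0 (fun _ => _) q).
Qed.

Lemma unstable_rule d U (u : vec d) : ~ stable d U u -> unit_vec d u ->
  exists X, In X U /\ forall x, In x X -> dot d (toR d x) u < 0.
Proof.
  intros Hns Hu. apply NNPP; intro Hn. apply Hns. split; auto.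
Qed.

Definition zmax1 (X : list (site 1)) : Z :=
  fold_right (fun y acc => Z.max (Z.abs (y Fin.F1)) acc) 1%Z X.

Lemma zmax1_ge X : (1 <= zmax1 X)%Z /\ forall y, In y X -> (Z.abs (y Fin.F1) <= zmax1 X)%Z.
Proof.
  induction X as [|a X [IH1 IH2]]; simpl; [split; [lia|tauto]|].
  split; [lia|]. intros y [<-|Hy]; [lia|]. specialize (IH2 y Hy); lia.
Qed.

Theorem main1 (U : list (list (site 1))) (HU : update_family 1 U)
    (Hsc : supercritical 1 U) :
  exists (u : vec 1) (a1 : R) (z : site 1) (Rset : site 1 -> Prop)
         (xs : list (site 1)),
    unit_vec 1 u /\ 0 < a1 /\
    (forall i, toR 1 z i = a1 * u i) /\
    R_shape 1 u a1 Rset /\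
    (exists y, Rset y) /\
    (forall x, In x xs ->
       exists y, Rset y /\ (x = sadd 1 z y \/ x = sadd 1 (sscale 1 2 z) y)) /\
    forall (P0 P1 : clocks 1) (eta : trajectory 1),
      harris_kcm 1 U P0 P1 eta ->
      forall (s : R) (ts : list R),
        length ts = length xs ->
        incr_from s ts ->
        Forall2 (fun x t => P0 x t) xs ts ->
        (forall y, Rset y -> eta s y = Zero) ->
        (forall x r, (Rset x \/ In x xs) -> s < r <= last ts s -> ~ P1 x r) ->
        forall y, Rset y -> eta (last ts s) (sadd 1 z y) = Zero.
Proof.
  destruct Hsc as [v [Hv Hsc]].
  assert (Hvv : v Fin.F1 * v Fin.F1 = 1) by (unfold unit_vec, dot in Hv; simpl in Hv; lra).
  destruct (unstable_rule 1 U v (Hsc v Hv ltac:(rewrite Hv; lra)) Hv) as [X [HX HXv]].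
  set (sg := if Rlt_dec 0 (v Fin.F1) then 1%Z else (-1)%Z).
  assert (Hsg : IZR sg = v Fin.F1).
  { unfold sg; destruct (Rlt_dec 0 (v Fin.F1)); simpl; nra. }
  assert (Hsg2 : (sg * sg = 1)%Z) by (unfold sg; destruct (Rlt_dec _ _); lia).
  assert (HXs : forall y, In y X -> (sg * y Fin.F1 < 0)%Z).
  { intros y Hy. specialize (HXv y Hy). unfold dot, toR in HXv; simpl in HXv.
    apply lt_IZR. rewrite mult_IZR, Hsg. lra. }
  assert (sgK : forall a, (sg * (sg * a) = a)%Z) by (intro a; rewrite Z.mul_assoc, Hsg2; ring).
  destruct (zmax1_ge X) as [Hm1 HmX]. set (m := zmax1 X) in *.
  set (mk := fun (a : Z) => (fun _ : Fin.t 1 => a) : site 1).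
  set (L := map (fun j => mk (sg * (m + Z.of_nat j))%Z) (seq 0 (Z.to_nat m))).
  set (Rset := fun x : site 1 => (0 <= sg * x Fin.F1 < m)%Z).
  assert (HinL : forall x : site 1, (m <= sg * x Fin.F1 < 2 * m)%Z -> In x L).
  { intros x Hx. unfold L. apply in_map_iff. exists (Z.to_nat (sg * x Fin.F1 - m)).
    split.
    - unfold mk. apply functional_extensionality; intro i. rewrite (fin1 i).
      rewrite Z2Nat.id by lia. replace (m + (sg * x Fin.F1 - m))%Z with (sg * x Fin.F1)%Z by ring.
      apply sgK.
    - apply in_seq. lia. }
  assert (HLin : forall x, In x L -> (m <= sg * x Fin.F1 < 2 * m)%Z).
  { intros x Hx. unfold L in Hx. apply in_map_iff in Hx. destruct Hx as [j [<- Hj]].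
    apply in_seq in Hj. unfold mk. rewrite sgK. lia. }
  exists v, (IZR m), (mk (sg * m)%Z), Rset, (concat (repeat L (length L))).
  split; [auto|]. split; [apply IZR_lt; lia|].
  split; [intro i; rewrite (fin1 i); unfold toR, mk; rewrite mult_IZR, Hsg; ring|].
  split.
  { split; [|intro E; discriminate E]. intros _ x. unfold Rset. split.
    - intros Hx. exists (IZR (sg * x Fin.F1)). split.
      + split; [apply IZR_le; lia | apply IZR_lt; lia].
      + intro i; rewrite (fin1 i). unfold toR. rewrite mult_IZR, Hsg.
        transitivity (IZR (x Fin.F1) * (v Fin.F1 * v Fin.F1)); [rewrite Hvv; ring | ring].
    - intros [t [Ht Hxt]]. specialize (Hxt Fin.F1). unfold toR in Hxt.
      assert (E : IZR (sg * x Fin.F1) = t) by (rewrite mult_IZR, Hsg, Hxt; nra).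
      split; [apply le_IZR | apply lt_IZR]; rewrite E; lra. }
  split; [exists (mk 0%Z); unfold Rset, mk; lia|].
  split.
  { intros x Hx. apply in_concat in Hx. destruct Hx as [l' [Hl' Hx]].
    apply repeat_spec in Hl'. subst l'. pose proof (HLin x Hx) as Hb.
    exists (mk (x Fin.F1 - sg * m)%Z). split; [unfold Rset, mk; nia|].
    left. apply functional_extensionality; intro i; rewrite (fin1 i). unfold sadd, mk. lia. }
  intros P0 P1 eta Hk s ts Hlen Hincr HF HR0 HP1 y Hy.
  apply (dyn_main 1 U P0 P1 eta Hk Rset L (fun x => IZR (sg * x Fin.F1)%Z)); auto.
  - intros x Hx. exists X; split; auto. intros q Hq.
    pose proof (HLin x Hx). specialize (HXs q Hq). specialize (HmX q Hq).
    assert (E : (sg * sadd 1 x q Fin.F1 = sg * x Fin.F1 + sg * q Fin.F1)%Z) by (unfold sadd; ring).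
    assert (Hsq : (- m <= sg * q Fin.F1)%Z).
    { destruct (Z.abs_spec (q Fin.F1)) as [[? ?]|[? ?]]; unfold sg in *; destruct (Rlt_dec _ _); lia. }
    destruct (Z_lt_le_dec (sg * sadd 1 x q Fin.F1) m).
    + left. unfold Rset. lia.
    + right. split; [apply HinL; lia|]. apply IZR_lt. lia.
  - apply HinL. unfold Rset in Hy. unfold sadd, mk. nia.
Qed.


Definition f1 : Fin.t 2 := Fin.F1.
Definition f2 : Fin.t 2 := Fin.FS Fin.F1.

Lemma fin2 (i : Fin.t 2) : i = f1 \/ i = f2.
Proof.
  pattern i; apply Fin.caseS'; [left; reflexivity|].
  intro p; pattern p; apply Fin.caseS'; [right; reflexivity|].
  intro q; apply (Fin.case0 (fun _ => _) q).
Qed.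

Lemma dot2 a b : dot 2 a b = a f1 * b f1 + a f2 * b f2.
Proof. unfold dot; simpl. unfold f1, f2. ring. Qed.

Definition mkv (a b : R) : vec 2 := fun i => Fin.caseS' i (fun _ => R) a (fun _ => b).
Definition mks (a b : Z) : site 2 := fun i => Fin.caseS' i (fun _ => Z) a (fun _ => b).
Lemma mkv1 a b : mkv a b f1 = a. Proof. reflexivity. Qed.
Lemma mkv2 a b : mkv a b f2 = b. Proof. reflexivity. Qed.
Lemma mks1 a b : mks a b f1 = a. Proof. reflexivity. Qed.
Lemma mks2 a b : mks a b f2 = b. Proof. reflexivity. Qed.
Lemma mks_eta (x : site 2) : x = mks (x f1) (x f2).
Proof. apply functional_extensionality; intro i; destruct (fin2 i); subst; reflexivity. Qed.
Lemma site2_ext (x y : site 2) : x f1 = y f1 -> x f2 = y f2 -> x = y.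
Proof. intros; apply functional_extensionality; intro i; destruct (fin2 i); subst; auto. Qed.

Lemma unst2 U v (Hsc : forall u, unit_vec 2 u -> dot 2 u v > 0 -> ~ stable 2 U u) (e : vec 2) :
  dot 2 e v > 0 -> exists X, In X U /\ forall y, In y X -> dot 2 (toR 2 y) e < 0.
Proof.
  intros He. rewrite dot2 in He.
  assert (Hpos : 0 < e f1 * e f1 + e f2 * e f2).
  { destruct (Req_dec (e f1) 0); destruct (Req_dec (e f2) 0); try nra. }
  set (n := sqrt (e f1 * e f1 + e f2 * e f2)).
  assert (Hn : 0 < n) by (apply sqrt_lt_R0; auto).
  assert (Hnn : n * n = e f1 * e f1 + e f2 * e f2) by (apply sqrt_sqrt; lra).
  set (u := fun i => e i / n).
  assert (Hu : unit_vec 2 u).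
  { unfold unit_vec. rewrite dot2. unfold u.
    replace (e f1 / n * (e f1 / n) + e f2 / n * (e f2 / n)) with ((e f1 * e f1 + e f2 * e f2)/(n*n)) by (field; lra).
    rewrite <- Hnn. field; lra. }
  assert (Huv : dot 2 u v > 0).
  { rewrite dot2. unfold u. replace (e f1 / n * v f1 + e f2 / n * v f2) with ((e f1 * v f1 + e f2 * v f2) / n) by (field; lra).
    apply Rdiv_lt_0_compat; lra. }
  destruct (unstable_rule 2 U u (Hsc u Hu Huv) Hu) as [X [HX HXu]].
  exists X; split; auto. intros y Hy. specialize (HXu y Hy). rewrite dot2 in HXu |- *.
  unfold u in HXu. replace (toR 2 y f1 * e f1 + toR 2 y f2 * e f2) with
    (n * (toR 2 y f1 * (e f1 / n) + toR 2 y f2 * (e f2 / n))) by (field; lra).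
  nra.
Qed.

Lemma pigeon (g : nat -> nat) n m : (m < n)%nat -> (forall t, (t < n)%nat -> (g t < m)%nat) ->
  exists t t', (t < n)%nat /\ (t' < n)%nat /\ t <> t' /\ g t = g t'.
Proof.
  intros Hmn Hg. apply NNPP; intro Hno.
  assert (HND : NoDup (map g (seq 0 n))).
  { apply NoDup_map_NoDup_ForallPairs; [|apply seq_NoDup].
    intros a b Ha Hb Hab. apply in_seq in Ha, Hb.
    destruct (Nat.eq_dec a b); auto. exfalso; apply Hno; exists a, b; repeat split; auto; lia. }
  assert (Hinc : incl (map g (seq 0 n)) (seq 0 m)).
  { intros y Hy. apply in_map_iff in Hy. destruct Hy as [t [<- Ht]]. apply in_seq in Ht.
    apply in_seq. specialize (Hg t ltac:(lia)). lia. }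
  pose proof (NoDup_incl_length HND Hinc). rewrite length_map, !length_seq in H. lia.
Qed.

Lemma up_close a b : up a = up b -> Rabs (a - b) < 1.
Proof.
  intros E. destruct (archimed a) as [Ha1 Ha2]. destruct (archimed b) as [Hb1 Hb2].
  rewrite E in Ha1, Ha2. apply Rabs_def1; lra.
Qed.

Lemma Rabs_lb a b : Rabs a <= b -> -b <= a <= b.
Proof. unfold Rabs; destruct (Rcase_abs a); lra. Qed.

Lemma dirichlet (v1 v2 : R) (N : nat) : v1 * v1 + v2 * v2 = 1 -> (1 <= N)%nat ->
  exists w1 w2 : Z, (w1 <> 0 \/ w2 <> 0)%Z /\
    Rabs (- IZR w2 * v1 + IZR w1 * v2) < 1 / INR N /\ IZR w1 * v1 + IZR w2 * v2 > 0.
Proof.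
  intros Hv HN.
  assert (Hv1 : Rabs v1 <= 1) by (apply Rabs_le; nra).
  assert (Hv2 : Rabs v2 <= 1) by (apply Rabs_le; nra).
  apply Rabs_lb in Hv1, Hv2.
  set (K := (4 * N + 1)%nat).
  set (fi := fun t : nat => (t / (K + 1))%nat). set (fj := fun t : nat => (t mod (K + 1))%nat).
  set (f := fun t => INR (fi t) * v2 - INR (fj t) * v1).
  set (c := (2 * K * N)%nat).
  set (g := fun t => Z.to_nat (up (INR N * f t) + Z.of_nat c)).
  assert (HNpos : 1 <= INR N) by (apply (le_INR 1); auto).
  assert (Hc : INR c = 2 * INR K * INR N) by (unfold c; rewrite !mult_INR; simpl; ring).
  assert (Hfb : forall t, (t < (K+1)*(K+1))%nat -> - (2 * INR K) <= f t <= 2 * INR K).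
  { intros t Ht. assert (fi t <= K)%nat by (unfold fi; apply Nat.lt_succ_r; apply Nat.Div0.div_lt_upper_bound; lia).
    assert (fj t <= K)%nat by (unfold fj; pose proof (Nat.mod_upper_bound t (K+1)); lia).
    apply le_INR in H, H0. pose proof (pos_INR (fi t)). pose proof (pos_INR (fj t)).
    unfold f. split; nra. }
  assert (Hbnd : forall t, (t < (K+1)*(K+1))%nat ->
    (- Z.of_nat c < up (INR N * f t) <= Z.of_nat c + 1)%Z).
  { intros t Ht. specialize (Hfb t Ht).
    destruct (archimed (INR N * f t)) as [H1 H2].
    split.
    - apply lt_IZR. rewrite opp_IZR, <- INR_IZR_INZ. nra.
    - apply le_IZR. rewrite plus_IZR, <- INR_IZR_INZ. nra. }
  destruct (pigeon g ((K+1)*(K+1)) (4 * K * N + 2)) as [t [t' [Ht [Ht' [Htt Hg]]]]].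
  - unfold K. nia.
  - intros t Ht. unfold g. specialize (Hbnd t Ht). unfold c in *. lia.
  - pose proof (Hbnd t Ht) as Hb1. pose proof (Hbnd t' Ht') as Hb2.
    assert (Eup : up (INR N * f t) = up (INR N * f t')) by (unfold g in Hg; lia).
    apply up_close in Eup.
    assert (Hclose : Rabs (f t - f t') < 1 / INR N).
    { apply Rabs_def2 in Eup. destruct Eup as [E1 E2]. apply Rabs_def1.
      - apply (Rmult_lt_reg_l (INR N)); [lra|].
        replace (INR N * (1 / INR N)) with 1 by (field; lra). lra.
      - apply (Rmult_lt_reg_l (INR N)); [lra|].
        replace (INR N * - (1 / INR N)) with (-1) by (field; lra). lra. }
    set (w1 := (Z.of_nat (fi t) - Z.of_nat (fi t'))%Z).
    set (w2 := (Z.of_nat (fj t) - Z.of_nat (fj t'))%Z).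
    assert (Hw : (w1 <> 0 \/ w2 <> 0)%Z).
    { apply NNPP; intro Hn. apply Htt.
      assert (fi t = fi t' /\ fj t = fj t') as [E1 E2] by (unfold w1, w2 in Hn; lia).
      rewrite (Nat.div_mod_eq t (K+1)), (Nat.div_mod_eq t' (K+1)).
      unfold fi, fj in E1, E2. rewrite E1, E2. reflexivity. }
    assert (Ec : - IZR w2 * v1 + IZR w1 * v2 = f t - f t').
    { unfold w1, w2, f. rewrite !minus_IZR, <- !INR_IZR_INZ. ring. }
    assert (Hw2 : 1 <= IZR w1 * IZR w1 + IZR w2 * IZR w2).
    { rewrite <- !mult_IZR, <- plus_IZR. apply IZR_le. destruct Hw; nia. }
    assert (Hid : (IZR w1 * v1 + IZR w2 * v2) * (IZR w1 * v1 + IZR w2 * v2) +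
                  (- IZR w2 * v1 + IZR w1 * v2) * (- IZR w2 * v1 + IZR w1 * v2) =
                  (IZR w1 * IZR w1 + IZR w2 * IZR w2) * (v1 * v1 + v2 * v2)) by ring.
    rewrite Hv, Ec in Hid.
    assert (Hc1 : (f t - f t') * (f t - f t') < 1).
    { apply Rabs_def2 in Hclose. assert (1 / INR N <= 1) by (apply (Rmult_le_reg_l (INR N)); [lra|]; field_simplify; lra). nra. }
    destruct (Rlt_dec 0 (IZR w1 * v1 + IZR w2 * v2)) as [Hp|Hp].
    + exists w1, w2. split; [auto|]. split; [rewrite Ec; auto|lra].
    + exists (- w1)%Z, (- w2)%Z. split; [lia|]. rewrite !opp_IZR. split.
      * replace (- - IZR w2 * v1 + - IZR w1 * v2) with (- (f t - f t')) by (rewrite <- Ec; ring).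
        rewrite Rabs_Ropp; auto.
      * assert (IZR w1 * v1 + IZR w2 * v2 <> 0) by (intro E; rewrite E in Hid; nra). lra.
Qed.


Lemma fold_min_in r0 l : In (fold_right Rmin r0 l) (r0 :: l).
Proof.
  induction l as [|a l IH]; [simpl; auto|].
  change (fold_right Rmin r0 (a :: l)) with (Rmin a (fold_right Rmin r0 l)).
  destruct (Rle_dec a (fold_right Rmin r0 l)).
  - rewrite Rmin_left by lra. right; left; auto.
  - rewrite Rmin_right by lra. destruct IH as [E|E]; [left; congruence| right; right; auto].
Qed.

Lemma fold_min_le r0 l : forall x, In x (r0 :: l) -> fold_right Rmin r0 l <= x.
Proof.
  induction l as [|a l IH]; intros x Hx.
  - simpl in *. destruct Hx as [E|[]]; subst; lra.
  - change (fold_right Rmin r0 (a :: l)) with (Rmin a (fold_right Rmin r0 l)).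
    pose proof (Rmin_l a (fold_right Rmin r0 l)).
    pose proof (Rmin_r a (fold_right Rmin r0 l)).
    destruct Hx as [E|[E|Hx]].
    + subst. pose proof (IH x (or_introl eq_refl)). lra.
    + subst. lra.
    + pose proof (IH x (or_intror Hx)). lra.
Qed.

Definition minl (l : list R) := match l with [] => 0 | c :: l' => fold_right Rmin c l' end.
Definition maxl (l : list R) := match l with [] => 0 | c :: l' => fold_right Rmax c l' end.

Lemma minl_le l x : In x l -> minl l <= x.
Proof. destruct l; [intros []|]. apply fold_min_le. Qed.
Lemma minl_in l : l <> [] -> In (minl l) l.
Proof. destruct l; [tauto|]. intros _; apply fold_min_in. Qed.
Lemma maxl_ge l x : In x l -> x <= maxl l.
Proof. destruct l; [intros []|]. apply fold_max_ge. Qed.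
Lemma maxl_in l : l <> [] -> In (maxl l) l.
Proof. destruct l; [tauto|]. intros _; apply fold_max_in. Qed.

Section Lam.
Context {A : Type} (U : list (list A)) (a b : A -> R) (M SS : R).

Definition depth (X : list A) (s : R) := minl (map (fun y => -(a y + s * b y)) X).
Definition fmx (s : R) := maxl (map (fun X => depth X s) U).

Lemma depth_le X s y : In y X -> depth X s <= -(a y + s * b y).
Proof. intros Hy. apply minl_le. apply in_map_iff. eauto. Qed.

Lemma depth_ex X s : X <> [] -> exists y, In y X /\ depth X s = -(a y + s * b y).
Proof.
  intros HX. assert (map (fun y => -(a y + s * b y)) X <> []) by (intro E0; apply HX; destruct X; [reflexivity| discriminate E0]).
  pose proof (minl_in _ H) as Hin. apply in_map_iff in Hin. destruct Hin as [y [E Hy]].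
  exists y; split; [auto|]. unfold depth; rewrite <- E. reflexivity.
Qed.

Lemma fmx_ge X s : In X U -> depth X s <= fmx s.
Proof. intros HX. apply maxl_ge. apply in_map_iff. eauto. Qed.

Lemma fmx_ex s : U <> [] -> exists X, In X U /\ fmx s = depth X s.
Proof.
  intros HU. assert (map (fun X => depth X s) U <> []) by (intro E0; apply HU; destruct U; [reflexivity| discriminate E0]).
  pose proof (maxl_in _ H) as Hin. apply in_map_iff in Hin. destruct Hin as [X [E HX]].
  exists X; split; [auto|]. unfold fmx; rewrite <- E. reflexivity.
Qed.

Context (HUne : U <> []) (HXne : forall X, In X U -> X <> [])
  (HbM : forall X y, In X U -> In y X -> Rabs (b y) <= M) (HM : 0 <= M) (HS : 0 <= SS)
  (Hcov : forall s, -SS <= s <= SS -> exists X, In X U /\ forall y, In y X -> a y + s * b y < 0).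

Lemma depth_lip X s s' : In X U -> depth X s <= depth X s' + M * Rabs (s - s').
Proof.
  intros HX. destruct (depth_ex X s' (HXne X HX)) as [y [Hy E]]. rewrite E.
  pose proof (depth_le X s y Hy). pose proof (HbM X y HX Hy).
  assert (Rabs ((s - s') * b y) <= M * Rabs (s - s')).
  { rewrite Rabs_mult. pose proof (Rabs_pos (s - s')). pose proof (Rabs_pos (b y)). nra. }
  pose proof (Rle_abs (- ((s - s') * b y))) as H2. rewrite Rabs_Ropp in H2. lra.
Qed.

Lemma fmx_lip s s' : fmx s <= fmx s' + M * Rabs (s - s').
Proof.
  destruct (fmx_ex s HUne) as [X [HX E]]. rewrite E.
  pose proof (depth_lip X s s' HX). pose proof (fmx_ge X s' HX). lra.
Qed.

Lemma fmx_cont x0 : continuity_pt fmx x0.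
Proof.
  unfold continuity_pt, continue_in, limit1_in, limit_in. intros eps Heps.
  exists (eps / (M + 1)). split; [apply Rdiv_lt_0_compat; lra|].
  intros x [_ Hd]. simpl in *. unfold R_dist in *.
  pose proof (fmx_lip x x0). pose proof (fmx_lip x0 x).
  rewrite Rabs_minus_sym in H0.
  assert (M * Rabs (x - x0) < eps).
  { apply (Rle_lt_trans _ ((M+1) * Rabs (x - x0))); [pose proof (Rabs_pos (x - x0)); nra|].
    apply (Rmult_lt_compat_l (M+1)) in Hd; [|lra].
    replace ((M + 1) * (eps / (M + 1))) with eps in Hd by (field; lra). lra. }
  apply Rabs_def1; lra.
Qed.

Lemma lambda_exists : exists lam, 0 < lam /\ forall s, -SS <= s <= SS ->
  exists X, In X U /\ forall y, In y X -> forall s', Rabs (s' - s) <= lam -> a y + s' * b y < 0.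
Proof.
  destruct (continuity_ab_min fmx (-SS) SS ltac:(lra) (fun c _ => fmx_cont c)) as [s0 [Hmin Hs0]].
  assert (Hpos : 0 < fmx s0).
  { destruct (Hcov s0 Hs0) as [X [HX HXv]]. destruct (depth_ex X s0 (HXne X HX)) as [y [Hy E]].
    pose proof (fmx_ge X s0 HX). specialize (HXv y Hy). lra. }
  exists (fmx s0 / (M + 1)). split; [apply Rdiv_lt_0_compat; lra|].
  intros s Hs. destruct (fmx_ex s HUne) as [X [HX E]]. exists X; split; auto.
  intros y Hy s' Hs'. specialize (Hmin s Hs). pose proof (depth_le X s y Hy).
  pose proof (HbM X y HX Hy).
  assert (Rabs ((s' - s) * b y) <= fmx s0 / (M + 1) * M).
  { rewrite Rabs_mult. pose proof (Rabs_pos (s' - s)). pose proof (Rabs_pos (b y)). apply Rmult_le_compat; auto. }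
  pose proof (Rle_abs ((s' - s) * b y)).
  assert (fmx s0 / (M + 1) * M < fmx s0).
  { replace (fmx s0 / (M + 1) * M) with (fmx s0 * (M / (M+1))) by (field; lra).
    assert (M / (M+1) < 1) by (apply (Rmult_lt_reg_r (M+1)); [lra|]; field_simplify; lra).
    nra. }
  replace (a y + s' * b y) with ((a y + s * b y) + (s' - s) * b y) by ring. lra.
Qed.
End Lam.


Definition Az (w1 w2 : Z) (y : site 2) : Z := (y f1 * w1 + y f2 * w2)%Z.
Definition Bz (w1 w2 : Z) (y : site 2) : Z := (- y f1 * w2 + y f2 * w1)%Z.

Lemma Az_add w1 w2 x y : Az w1 w2 (sadd 2 x y) = (Az w1 w2 x + Az w1 w2 y)%Z.
Proof. unfold Az, sadd. ring. Qed.
Lemma Bz_add w1 w2 x y : Bz w1 w2 (sadd 2 x y) = (Bz w1 w2 x + Bz w1 w2 y)%Z.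
Proof. unfold Bz, sadd. ring. Qed.

Lemma div_facts (B W : Z) : (0 < W)%Z -> ((B / W) * W <= B < (B / W) * W + W)%Z.
Proof.
  intros HW. pose proof (Z.div_mod B W ltac:(lia)). pose proof (Z.mod_pos_bound B W HW). lia.
Qed.

Section Bands.
Context (U : list (list (site 2))) (w1 w2 Mz : Z) (HM : (1 <= Mz)%Z).
Let A := Az w1 w2. Let B := Bz w1 w2.
Context (HAB : forall X y, In X U -> In y X -> (Z.abs (A y) <= Mz /\ Z.abs (B y) <= Mz)%Z)
  (XT XB : list (site 2)) (HXT : In XT U) (HXB : In XB U)
  (HXTp : forall y, In y XT -> (B y <= 0 /\ (B y = 0 -> A y < 0))%Z)
  (HXBp : forall y, In y XB -> (0 <= B y /\ (B y = 0 -> A y < 0))%Z)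
  (h : R) (Hh : 0 < h <= 1)
  (Hlam : forall s, -(IZR Mz + 4) <= s <= IZR Mz + 4 -> exists X, In X U /\
     forall y, In y X -> forall s', Rabs (s' - s) <= h -> IZR (A y) + s' * IZR (B y) < 0).

Definition Wz := (2 * Mz)%Z.
Definition T0 := - IZR Mz - 1 - 2 * h.
Definition mm := up ((2 * IZR Mz + 1 + 2 * h) / h).
Definition tau (k : Z) := T0 + IZR k * h.
Definition Hz := ((mm + 2) * Wz - Mz)%Z.
Definition line (j Bv : Z) := tau j * IZR Bv - h * IZR Wz * IZR (j * (j + 1)) / 2.
Definition Gf (Bv : Z) := line (Bv / Wz) Bv.
Definition Th (x : site 2) := IZR (A x) + Gf (B x).

Lemma mm_facts : IZR mm * h > 2 * IZR Mz + 1 + 2 * h /\ IZR mm * h <= 2 * IZR Mz + 1 + 3 * h /\ (1 <= mm)%Z.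
Proof.
  destruct (archimed ((2 * IZR Mz + 1 + 2 * h) / h)) as [H1 H2]. fold mm in H1, H2.
  assert (HMr : 1 <= IZR Mz) by (apply IZR_le; lia).
  assert (E : (2 * IZR Mz + 1 + 2 * h) / h * h = 2 * IZR Mz + 1 + 2 * h) by (field; lra).
  split; [|split].
  - apply (Rmult_lt_compat_r h) in H1; lra.
  - assert (IZR mm <= (2 * IZR Mz + 1 + 2 * h) / h + 1) by lra.
    apply (Rmult_le_compat_r h) in H; lra.
  - assert ((2 * IZR Mz + 1 + 2 * h) / h > 0) by (apply Rdiv_lt_0_compat; lra).
    assert (0 < mm)%Z by (apply lt_IZR; simpl; lra). lia.
Qed.

Lemma line_le (j Bv : Z) : line j Bv <= Gf Bv.
Proof.
  unfold Gf. set (k := (Bv / Wz)%Z).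
  assert (HW : (0 < Wz)%Z) by (unfold Wz; lia).
  destruct (div_facts Bv Wz HW) as [Hk1 Hk2]. fold k in Hk1, Hk2.
  assert (E : line k Bv - line j Bv = h * ((IZR k - IZR j) * (IZR Bv - IZR Wz * (IZR k + IZR j + 1) / 2))).
  { unfold line, tau. rewrite !mult_IZR, !plus_IZR. simpl. field. }
  assert (0 <= (IZR k - IZR j) * (IZR Bv - IZR Wz * (IZR k + IZR j + 1) / 2)).
  { destruct (Z_lt_le_dec j k) as [Hjk|Hjk].
    - assert (0 <= Wz * (k - j - 1))%Z by (apply Z.mul_nonneg_nonneg; lia).
      assert (Hr : (0 <= 2 * Bv - Wz * (k + j + 1))%Z) by lia.
      apply IZR_le in Hr. rewrite minus_IZR, mult_IZR, mult_IZR, !plus_IZR in Hr. simpl in Hr.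
      apply IZR_lt in Hjk. nra.
    - destruct (Z.eq_dec j k) as [->|Hne]; [rewrite Rminus_diag; lra|].
      assert (0 <= Wz * (j - k - 1))%Z by (apply Z.mul_nonneg_nonneg; lia).
      assert (Hr : (2 * Bv - Wz * (k + j + 1) <= 0)%Z) by lia.
      apply IZR_le in Hr. rewrite minus_IZR, mult_IZR, mult_IZR, !plus_IZR in Hr. simpl in Hr.
      apply IZR_le in Hjk. nra. }
  nra.
Qed.

Lemma Th_step x y : IZR (A y) + tau ((B x + B y) / Wz) * IZR (B y) < 0 -> Th (sadd 2 x y) < Th x.
Proof.
  intros Hv. unfold Th. unfold A, B in *. rewrite Az_add, Bz_add, plus_IZR.
  set (k' := ((Bz w1 w2 x + Bz w1 w2 y) / Wz)%Z) in *.
  pose proof (line_le k' (Bz w1 w2 x)).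
  assert (Gf (Bz w1 w2 x + Bz w1 w2 y) = line k' (Bz w1 w2 x + Bz w1 w2 y)) by reflexivity.
  assert (line k' (Bz w1 w2 x + Bz w1 w2 y) - line k' (Bz w1 w2 x) = tau k' * IZR (Bz w1 w2 y)).
  { unfold line. rewrite plus_IZR. ring. }
  lra.
Qed.

Lemma band_rule x : (0 <= B x <= Hz)%Z -> exists X, In X U /\ forall y, In y X ->
  (0 <= B x + B y <= Hz)%Z /\ IZR (A y) + tau ((B x + B y) / Wz) * IZR (B y) < 0.
Proof.
  intros Hx. destruct mm_facts as [Hm1 [Hm2 Hm3]].
  assert (HW : (0 < Wz)%Z) by (unfold Wz; lia).
  set (k := (B x / Wz)%Z).
  destruct (div_facts (B x) Wz HW) as [Hk1 Hk2]. fold k in Hk1, Hk2.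
  assert (HMr : 1 <= IZR Mz) by (apply IZR_le; lia).
  assert (Hk0 : (0 <= k <= mm + 1)%Z) by (unfold Hz, Wz in *; nia).
  assert (Htau : forall j, tau j = T0 + IZR j * h) by reflexivity.
  destruct (Z.eq_dec k 0) as [E0|N0].
  - exists XB; split; auto. intros y Hy. destruct (HXBp y Hy) as [Hb Hb0].
    destruct (HAB XB y HXB Hy) as [Ha Hb'].
    set (k' := ((B x + B y) / Wz)%Z).
    destruct (div_facts (B x + B y) Wz HW) as [Hk1' Hk2']. fold k' in Hk1', Hk2'.
    assert (Hk' : (0 <= k' <= 1)%Z) by (unfold Wz in *; nia).
    split; [unfold Hz, Wz in *; nia|].
    assert (Hs : tau k' < - IZR Mz).
    { rewrite Htau. unfold T0. assert (IZR k' <= 1) by (apply IZR_le; lia).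
      assert (0 <= IZR k') by (apply IZR_le; lia). nra. }
    destruct (Z.eq_dec (B y) 0) as [Eb|Nb].
    + rewrite Eb. specialize (Hb0 Eb). apply IZR_lt in Hb0. simpl. lra.
    + assert (Hb1 : 1 <= IZR (B y)) by (apply IZR_le; lia).
      assert (HA : IZR (A y) <= IZR Mz) by (apply IZR_le; lia). nra.
  - destruct (Z.eq_dec k (mm + 1)) as [E1|N1].
    + exists XT; split; auto. intros y Hy. destruct (HXTp y Hy) as [Hb Hb0].
      destruct (HAB XT y HXT Hy) as [Ha Hb'].
      set (k' := ((B x + B y) / Wz)%Z).
      destruct (div_facts (B x + B y) Wz HW) as [Hk1' Hk2']. fold k' in Hk1', Hk2'.
      assert (Hk' : (mm <= k')%Z) by (unfold Wz in *; nia).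
      split; [unfold Hz, Wz in *; nia|].
      assert (Hs : tau k' > IZR Mz).
      { rewrite Htau. unfold T0. assert (IZR mm <= IZR k') by (apply IZR_le; lia). nra. }
      destruct (Z.eq_dec (B y) 0) as [Eb|Nb].
      * rewrite Eb. specialize (Hb0 Eb). apply IZR_lt in Hb0. simpl. lra.
      * assert (Hb1 : IZR (B y) <= -1) by (apply IZR_le; lia).
        assert (HA : IZR (A y) <= IZR Mz) by (apply IZR_le; lia). nra.
    + assert (Hk1r : 1 <= IZR k) by (apply IZR_le; lia).
      assert (Hkm : IZR k <= IZR mm) by (apply IZR_le; lia).
      assert (Hrange : -(IZR Mz + 4) <= tau k <= IZR Mz + 4) by (rewrite Htau; unfold T0; nra).
      destruct (Hlam (tau k) Hrange) as [X [HX HXv]].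
      exists X; split; auto. intros y Hy.
      destruct (HAB X y HX Hy) as [Ha Hb'].
      set (k' := ((B x + B y) / Wz)%Z).
      destruct (div_facts (B x + B y) Wz HW) as [Hk1' Hk2']. fold k' in Hk1', Hk2'.
      assert (Hk' : (k - 1 <= k' <= k + 1)%Z) by (unfold Wz in *; nia).
      split; [unfold Hz, Wz in *; nia|].
      apply HXv; auto. rewrite !Htau.
      replace (T0 + IZR k' * h - (T0 + IZR k * h)) with ((IZR k' - IZR k) * h) by ring.
      rewrite <- minus_IZR. rewrite Rabs_mult, (Rabs_right h) by lra.
      assert (Rabs (IZR (k' - k)) <= 1).
      { rewrite <- abs_IZR. apply IZR_le. lia. }
      pose proof (Rabs_pos (IZR (k' - k))). nra.
Qed.

Definition Gb := (IZR Mz + 3) * IZR Hz.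

Lemma G_bounds Bv : (0 <= Bv <= Hz)%Z -> - Gb <= Gf Bv <= Gb.
Proof.
  intros HB. destruct mm_facts as [Hm1 [Hm2 Hm3]].
  assert (HW : (0 < Wz)%Z) by (unfold Wz; lia).
  assert (HMr : 1 <= IZR Mz) by (apply IZR_le; lia).
  assert (HBr : 0 <= IZR Bv <= IZR Hz) by (split; apply IZR_le; lia).
  unfold Gb. split.
  - pose proof (line_le 0 Bv). unfold line, tau in H. simpl in H. unfold T0 in H. nra.
  - unfold Gf. set (k := (Bv / Wz)%Z).
    destruct (div_facts Bv Wz HW) as [Hk1 Hk2]. fold k in Hk1, Hk2.
    assert (Hk0 : (0 <= k <= mm + 1)%Z) by (unfold Hz, Wz in *; nia).
    assert (Hkr : 0 <= IZR k <= IZR mm + 1) by (split; [apply IZR_le; lia| rewrite <- (plus_IZR mm 1); apply IZR_le; lia]).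
    assert (Hkk : 0 <= IZR (k * (k + 1))) by (apply IZR_le; nia).
    assert (HWr : 0 < IZR Wz) by (apply IZR_lt; lia).
    unfold line, tau, T0.
    assert (0 <= h * IZR Wz * IZR (k * (k + 1)) / 2).
    { apply Rmult_le_pos; [|lra]. apply Rmult_le_pos; [|auto]. nra. }
    assert (T0' : - IZR Mz - 1 - 2 * h + IZR k * h <= IZR Mz + 2) by nra.
    nra.
Qed.

End Bands.


Definition Yf (U : list (list (site 2))) : Z :=
  fold_right (fun y acc => Z.max (Z.abs (y f1) + Z.abs (y f2)) acc) 1%Z (concat U).

Lemma Yf_ge U : (1 <= Yf U)%Z /\ forall X y, In X U -> In y X -> (Z.abs (y f1) + Z.abs (y f2) <= Yf U)%Z.
Proof.
  unfold Yf. assert (G : forall l, (1 <= fold_right (fun y acc => Z.max (Z.abs (y f1) + Z.abs (y f2)) acc) 1%Z l)%Z /\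
    forall y, In y l -> (Z.abs (y f1) + Z.abs (y f2) <= fold_right (fun y acc => Z.max (Z.abs (y f1) + Z.abs (y f2)) acc) 1%Z l)%Z).
  { induction l as [|a l [IH1 IH2]]; simpl; [split; [lia|tauto]|].
    split; [lia|]. intros y [<-|Hy]; [lia|]. specialize (IH2 y Hy); lia. }
  destruct (G (concat U)) as [G1 G2]. split; auto.
  intros X y HX Hy. apply G2. apply in_concat. eauto.
Qed.

Lemma abs_bil a b c d : (Z.abs (a * c + b * d) <= (Z.abs a + Z.abs b) * (Z.abs c + Z.abs d))%Z.
Proof.
  pose proof (Z.abs_triangle (a * c) (b * d)). rewrite !Z.abs_mul in H.
  pose proof (Z.abs_nonneg a). pose proof (Z.abs_nonneg b).
  pose proof (Z.abs_nonneg c). pose proof (Z.abs_nonneg d).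
  assert (0 <= Z.abs a * Z.abs d)%Z by (apply Z.mul_nonneg_nonneg; lia).
  assert (0 <= Z.abs b * Z.abs c)%Z by (apply Z.mul_nonneg_nonneg; lia).
  rewrite Z.mul_add_distr_r, !Z.mul_add_distr_l. lia.
Qed.

Lemma coord_bound (n a b c d x : Z) : (1 <= n)%Z -> (Z.abs c <= n)%Z -> (Z.abs d <= n)%Z ->
  (n * x = a * c - b * d)%Z -> (Z.abs x <= Z.abs a + Z.abs b)%Z.
Proof.
  intros Hn Hc Hd E.
  pose proof (abs_bil a (-b) c d) as Hb. replace (a * c + - b * d)%Z with (n * x)%Z in Hb by lia.
  rewrite Z.abs_mul, Z.abs_opp in Hb. rewrite (Z.abs_eq n) in Hb by lia.
  assert ((Z.abs a + Z.abs b) * (Z.abs c + Z.abs d) <= (Z.abs a + Z.abs b) * (2 * n))%Z.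
  { apply Z.mul_le_mono_nonneg_l; lia. }
  assert (H2 : (Z.abs (a * c - b * d) <= Z.abs a * n + Z.abs b * n)%Z).
  { pose proof (Z.abs_triangle (a * c) (- (b * d))). rewrite Z.abs_opp, !Z.abs_mul in H0.
    assert (Z.abs a * Z.abs c <= Z.abs a * n)%Z by (apply Z.mul_le_mono_nonneg_l; lia).
    assert (Z.abs b * Z.abs d <= Z.abs b * n)%Z by (apply Z.mul_le_mono_nonneg_l; lia).
    replace (a * c - b * d)%Z with (a * c + - (b * d))%Z by ring. lia. }
  rewrite <- E, Z.abs_mul, (Z.abs_eq n) in H2 by lia.
  apply (Z.mul_le_mono_pos_l _ _ n); lia.
Qed.

Lemma setup2 U (HU : update_family 2 U) (Hsc : supercritical 2 U) :
  exists w1 w2 Mz, (1 <= Mz)%Z /\ (1 <= w1 * w1 + w2 * w2)%Z /\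
  (forall X y, In X U -> In y X -> (Z.abs (Az w1 w2 y) <= Mz /\ Z.abs (Bz w1 w2 y) <= Mz)%Z) /\
  exists XT XB, In XT U /\ In XB U /\
  (forall y, In y XT -> (Bz w1 w2 y <= 0 /\ (Bz w1 w2 y = 0 -> Az w1 w2 y < 0))%Z) /\
  (forall y, In y XB -> (0 <= Bz w1 w2 y /\ (Bz w1 w2 y = 0 -> Az w1 w2 y < 0))%Z) /\
  exists h, 0 < h <= 1 /\
  (forall s, -(IZR Mz + 4) <= s <= IZR Mz + 4 -> exists X, In X U /\
     forall y, In y X -> forall s', Rabs (s' - s) <= h -> IZR (Az w1 w2 y) + s' * IZR (Bz w1 w2 y) < 0).
Proof.
  destruct Hsc as [v [Hv Hsc]].
  assert (Hv1 : v f1 * v f1 + v f2 * v f2 = 1) by (unfold unit_vec in Hv; rewrite dot2 in Hv; lra).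
  destruct (Yf_ge U) as [HY1 HYb]. set (Y := Yf U) in *.
  set (Nn := Z.to_nat (4 * Y + 20)).
  assert (HNn : INR Nn = IZR (4 * Y + 20)) by (unfold Nn; rewrite INR_IZR_INZ, Z2Nat.id by lia; reflexivity).
  destruct (dirichlet (v f1) (v f2) Nn Hv1 ltac:(unfold Nn; lia)) as [w1 [w2 [Hw0 [Hc Hp]]]].
  rewrite HNn in Hc.
  set (n2 := (w1 * w1 + w2 * w2)%Z). set (Wm := (Z.abs w1 + Z.abs w2)%Z).
  set (Mz := (Y * Wm)%Z).
  assert (Hn2 : (1 <= n2)%Z) by (unfold n2; destruct Hw0; nia).
  assert (HWm : (1 <= Wm)%Z) by (unfold Wm; destruct Hw0; lia).
  assert (HMz : (1 <= Mz)%Z) by (unfold Mz; nia).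
  assert (HWm2 : (Wm * Wm <= 2 * n2)%Z).
  { unfold Wm, n2.
    assert (E1 : (Z.abs w1 * Z.abs w1 = w1 * w1)%Z) by (rewrite <- Z.abs_mul; apply Z.abs_eq; apply Z.square_nonneg).
    assert (E2 : (Z.abs w2 * Z.abs w2 = w2 * w2)%Z) by (rewrite <- Z.abs_mul; apply Z.abs_eq; apply Z.square_nonneg).
    pose proof (Z.square_nonneg (Z.abs w1 - Z.abs w2)). nia. }
  assert (HAB : forall X y, In X U -> In y X -> (Z.abs (Az w1 w2 y) <= Mz /\ Z.abs (Bz w1 w2 y) <= Mz)%Z).
  { intros X y HX Hy. specialize (HYb X y HX Hy).
    pose proof (Z.abs_nonneg (y f1)). pose proof (Z.abs_nonneg (y f2)).
    assert (Hyw : ((Z.abs (y f1) + Z.abs (y f2)) * Wm <= Y * Wm)%Z) by (apply Z.mul_le_mono_nonneg_r; lia).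
    unfold Az, Bz, Mz. split.
    - pose proof (abs_bil (y f1) (y f2) w1 w2) as Hq. fold Wm in Hq. lia.
    - pose proof (abs_bil (y f1) (y f2) (- w2) w1) as Hq. rewrite Z.abs_opp in Hq.
      replace (Z.abs w2 + Z.abs w1)%Z with Wm in Hq by (unfold Wm; ring).
      replace (- y f1 * w2 + y f2 * w1)%Z with (y f1 * - w2 + y f2 * w1)%Z by ring. lia. }
  set (p := IZR w1 * v f1 + IZR w2 * v f2) in *.
  set (c := - IZR w2 * v f1 + IZR w1 * v f2) in *.
  assert (Hrule : forall al be, al * p + be * c > 0 -> exists X, In X U /\
     forall y, In y X -> al * IZR (Az w1 w2 y) + be * IZR (Bz w1 w2 y) < 0).
  { intros al be Hab.
    destruct (unst2 U v Hsc (mkv (al * IZR w1 - be * IZR w2) (al * IZR w2 + be * IZR w1))) as [X [HX HXv]].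
    { rewrite dot2, mkv1, mkv2. unfold p, c in Hab. lra. }
    exists X; split; auto. intros y Hy. specialize (HXv y Hy). rewrite dot2, mkv1, mkv2 in HXv.
    unfold toR in HXv. unfold Az, Bz. rewrite !plus_IZR, !mult_IZR, opp_IZR.
    replace (al * (IZR (y f1) * IZR w1 + IZR (y f2) * IZR w2) + be * (- IZR (y f1) * IZR w2 + IZR (y f2) * IZR w1))
      with (IZR (y f1) * (al * IZR w1 - be * IZR w2) + IZR (y f2) * (al * IZR w2 + be * IZR w1)) by ring.
    exact HXv. }
  assert (HYr : 1 <= IZR Y) by (apply IZR_le; lia).
  assert (HWr : 1 <= IZR Wm) by (apply IZR_le; lia).
  assert (HMr : IZR Mz = IZR Y * IZR Wm) by (unfold Mz; apply mult_IZR).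
  assert (Hc2 : Rabs c < 1 / (4 * IZR Y + 20)).
  { rewrite plus_IZR, mult_IZR in Hc. exact Hc. }
  apply Rabs_def2 in Hc2. destruct Hc2 as [Hc2 Hc3].
  assert (Hinv : 1 / (4 * IZR Y + 20) <= 1 / 24).
  { apply Rmult_le_reg_l with (4 * IZR Y + 20); [lra|]. field_simplify; lra. }
  assert (Hpp : p * p + c * c = IZR n2).
  { unfold p, c, n2. rewrite plus_IZR, !mult_IZR.
    replace (IZR w1 * IZR w1 + IZR w2 * IZR w2) with ((IZR w1 * IZR w1 + IZR w2 * IZR w2) * (v f1 * v f1 + v f2 * v f2)) by (rewrite Hv1; ring).
    ring. }
  assert (HWm2r : IZR Wm * IZR Wm <= 2 * IZR n2) by (rewrite <- mult_IZR, <- (mult_IZR 2); apply IZR_le; lia).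
  assert (Hcc : c * c <= 1 / 4) by nra.
  assert (Hn2r : 1 <= IZR n2) by (apply IZR_le; lia).
  assert (Hpp2 : p * p >= (IZR Wm / 2) * (IZR Wm / 2)). { clear -Hpp Hcc HWm2r Hn2r. clearbody p c n2 Wm. lra. }
  assert (Hpb : p >= IZR Wm / 2).
  { destruct (Rlt_dec p (IZR Wm / 2)); [|lra]. exfalso.
    assert (p * p < (IZR Wm / 2) * (IZR Wm / 2)) by (apply Rmult_le_0_lt_compat; lra). lra. }
  assert (HMr1 : 1 <= IZR Mz) by (apply IZR_le; lia).
  set (eps := 1 / (2 * IZR Mz)).
  assert (Heps : eps * IZR Mz = 1 / 2) by (unfold eps; field; lra).
  assert (Hepos : 0 < eps) by (unfold eps; apply Rdiv_lt_0_compat; lra).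
  assert (Hep : eps * p >= 1 / (4 * IZR Y)).
  { assert (eps * p >= eps * (IZR Wm / 2)) by nra.
    assert (eps * (IZR Wm / 2) = 1 / (4 * IZR Y)) by (unfold eps; rewrite HMr; field; lra). lra. }
  assert (Hcmp : 1 / (4 * IZR Y + 20) < 1 / (4 * IZR Y)).
  { apply Rmult_lt_reg_l with ((4 * IZR Y + 20) * (4 * IZR Y)); [nra|]. field_simplify; lra. }
  destruct (Hrule eps 1 ltac:(lra)) as [XT [HXT HXTv]].
  destruct (Hrule eps (-1) ltac:(lra)) as [XB [HXB HXBv]].
  assert (HepA : forall X y, In X U -> In y X -> - (1/2) <= eps * IZR (Az w1 w2 y) <= 1/2).
  { intros X y HX Hy. destruct (HAB X y HX Hy) as [Ha _].
    assert (Hab : Rabs (IZR (Az w1 w2 y)) <= IZR Mz) by (rewrite <- abs_IZR; apply IZR_le; lia).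
    apply Rabs_lb in Hab. nra. }
  exists w1, w2, Mz. split; [auto|]. split; [auto|]. split; [auto|].
  exists XT, XB. split; [auto|]. split; [auto|]. split; [|split].
  - intros y Hy. specialize (HXTv y Hy). pose proof (HepA XT y HXT Hy). split.
    + apply Z.nlt_ge; intro Hb. apply Zlt_le_succ in Hb. apply IZR_le in Hb. simpl in Hb. lra.
    + intros E. rewrite E in HXTv. apply lt_IZR. simpl in *. nra.
  - intros y Hy. specialize (HXBv y Hy). pose proof (HepA XB y HXB Hy). split.
    + apply Z.nlt_ge; intro Hb. assert (Hb' : (Bz w1 w2 y <= -1)%Z) by lia. apply IZR_le in Hb'. lra.
    + intros E. rewrite E in HXBv. apply lt_IZR. simpl in *. nra.
  - assert (Hcov : forall s, -(IZR Mz + 4) <= s <= IZR Mz + 4 -> exists X, In X U /\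
       forall y, In y X -> IZR (Az w1 w2 y) + s * IZR (Bz w1 w2 y) < 0).
    { intros s Hs. destruct (Hrule 1 s) as [X [HX HXv]].
      - assert (Rabs (s * c) <= (IZR Mz + 4) * (1 / (4 * IZR Y + 20))).
        { rewrite Rabs_mult. apply Rmult_le_compat; try apply Rabs_pos.
          - apply Rabs_le; lra.
          - apply Rlt_le, Rabs_def1; lra. }
        assert ((IZR Mz + 4) * (1 / (4 * IZR Y + 20)) < IZR Wm / 2).
        { rewrite HMr. apply Rmult_lt_reg_l with (2 * (4 * IZR Y + 20)); [lra|]. field_simplify; nra. }
        pose proof (Rle_abs (- (s * c))). rewrite Rabs_Ropp in H1. lra.
      - exists X; split; auto. intros y Hy. specialize (HXv y Hy). lra. }
    assert (HUne : U <> []) by (intro E; rewrite E in HXT; destruct HXT).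
    destruct (lambda_exists U (fun y => IZR (Az w1 w2 y)) (fun y => IZR (Bz w1 w2 y)) (IZR Mz) (IZR Mz + 4)
      HUne ltac:(intros X HX; apply HU; auto)
      ltac:(intros X y HX Hy; cbv beta; rewrite <- abs_IZR; apply IZR_le; apply (HAB X y HX Hy))
      ltac:(lra) ltac:(lra) Hcov) as [lam [Hlam HlamP]].
    exists (Rmin 1 lam). split; [split; [apply Rmin_glb_lt; lra | apply Rmin_l]|].
    intros s Hs. destruct (HlamP s Hs) as [X [HX HXv]]. exists X; split; auto.
    intros y Hy s' Hs'. apply HXv; auto. pose proof (Rmin_r 1 lam). lra.
Qed.


Lemma Rdiv_le_0_compat a b : 0 <= a -> 0 < b -> 0 <= a / b.
Proof. intros. unfold Rdiv. apply Rmult_le_pos; [lra| left; apply Rinv_0_lt_compat; lra]. Qed.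

Lemma abs_le_sq a : (Z.abs a <= a * a)%Z.
Proof. destruct (Z.abs_spec a) as [[? ->]|[? ->]]; nia. Qed.

Theorem main2 (U : list (list (site 2))) (HU : update_family 2 U)
    (Hsc : supercritical 2 U) :
  exists (u : vec 2) (a1 : R) (z : site 2) (Rset : site 2 -> Prop)
         (xs : list (site 2)),
    unit_vec 2 u /\ 0 < a1 /\
    (forall i, toR 2 z i = a1 * u i) /\
    R_shape 2 u a1 Rset /\
    (exists y, Rset y) /\
    (forall x, In x xs ->
       exists y, Rset y /\ (x = sadd 2 z y \/ x = sadd 2 (sscale 2 2 z) y)) /\
    forall (P0 P1 : clocks 2) (eta : trajectory 2),
      harris_kcm 2 U P0 P1 eta ->
      forall (s : R) (ts : list R),
        length ts = length xs ->
        incr_from s ts ->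
        Forall2 (fun x t => P0 x t) xs ts ->
        (forall y, Rset y -> eta s y = Zero) ->
        (forall x r, (Rset x \/ In x xs) -> s < r <= last ts s -> ~ P1 x r) ->
        forall y, Rset y -> eta (last ts s) (sadd 2 z y) = Zero.
Proof.
  destruct (setup2 U HU Hsc) as [w1 [w2 [Mz [HM [Hn2 [HAB [XT [XB [HXT [HXB [HXTp [HXBp [h [Hh Hlam]]]]]]]]]]]]]].
  set (A := Az w1 w2) in *. set (B := Bz w1 w2) in *.
  set (n2 := (w1 * w1 + w2 * w2)%Z) in *.
  destruct (mm_facts Mz HM h Hh) as [Hm1 [Hm2 Hm3]].
  set (H0 := Hz Mz h). set (G := Gb Mz h). set (Th' := Th w1 w2 Mz h).
  assert (HH0 : (0 < H0)%Z) by (unfold H0, Hz, Wz; nia).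
  assert (HMr : 1 <= IZR Mz) by (apply IZR_le; lia).
  assert (HH0r : 0 < IZR H0) by (apply IZR_lt; lia).
  assert (HG : 0 <= G) by (unfold G, Gb; fold H0; nra).
  set (kk := up (IZR Mz + 2 * G + 1)).
  destruct (archimed (IZR Mz + 2 * G + 1)) as [Hkk _]. fold kk in Hkk.
  assert (Hkk1 : (1 <= kk)%Z) by (assert (0 < kk)%Z by (apply lt_IZR; lra); lia).
  set (Q := (kk * n2)%Z).
  assert (HQk : (kk <= Q)%Z) by (unfold Q; nia).
  assert (HQr : IZR kk <= IZR Q) by (apply IZR_le; auto).
  assert (HQM : (Mz < Q)%Z) by (apply lt_IZR; lra).
  set (r := sqrt (IZR n2)).
  assert (Hn2r : 1 <= IZR n2) by (apply IZR_le; lia).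
  assert (Hr : 0 < r) by (apply sqrt_lt_R0; lra).
  assert (Hrr : r * r = IZR n2) by (apply sqrt_sqrt; lra).
  assert (Hn2e : IZR n2 = IZR w1 * IZR w1 + IZR w2 * IZR w2) by (unfold n2; rewrite plus_IZR, !mult_IZR; ring).
  set (Rset := fun x => (0 <= A x < Q /\ 0 <= B x <= H0)%Z).
  set (condL := fun x => (Q <= A x /\ 0 <= B x <= H0)%Z /\ Th' x < 2 * IZR Q + G).
  set (Bx := (3 * Q + H0)%Z).
  set (zr := map (fun k => Z.of_nat k - Bx)%Z (seq 0 (Z.to_nat (2 * Bx + 1)))).
  set (box := flat_map (fun a => map (fun b => mks a b) zr) zr).
  set (L := filter (fun x => Pb (condL x)) box).
  assert (Hzr : forall a, (Z.abs a <= Bx)%Z -> In a zr).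
  { intros a Ha. unfold zr. apply in_map_iff. exists (Z.to_nat (a + Bx)). split.
    - rewrite Z2Nat.id by lia. ring.
    - apply in_seq. lia. }
  assert (Hbox : forall x : site 2, (Z.abs (x f1) <= Bx)%Z -> (Z.abs (x f2) <= Bx)%Z -> In x box).
  { intros x H1 H2. rewrite (mks_eta x). unfold box. apply in_flat_map. exists (x f1). split; auto.
    apply in_map_iff. exists (x f2); split; auto. }
  assert (Hw1 : (Z.abs w1 <= n2)%Z) by (pose proof (abs_le_sq w1); unfold n2; nia).
  assert (Hw2 : (Z.abs w2 <= n2)%Z) by (pose proof (abs_le_sq w2); unfold n2; nia).
  assert (Hcoord : forall x : site 2, (0 <= A x <= 3 * Q)%Z -> (0 <= B x <= H0)%Z -> In x box).
  { intros x Ha Hb. apply Hbox.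
    - pose proof (coord_bound n2 (A x) (B x) w1 w2 (x f1) ltac:(lia) Hw1 Hw2
        ltac:(unfold n2, A, B, Az, Bz; ring)). unfold Bx. lia.
    - pose proof (coord_bound n2 (A x) (B x) w2 (- w1) (x f2) ltac:(lia) Hw2 ltac:(rewrite Z.abs_opp; lia)
        ltac:(unfold n2, A, B, Az, Bz; ring)). unfold Bx. lia. }
  assert (HTh : forall x, Th' x = IZR (A x) + Gf Mz h (B x)) by reflexivity.
  assert (HA3 : forall x, (0 <= B x <= H0)%Z -> Th' x < 2 * IZR Q + G -> (A x < 3 * Q)%Z).
  { intros x Hb Ht. pose proof (G_bounds Mz HM h Hh (B x) Hb) as [Gl Gu]. fold G in Gl, Gu.
    rewrite HTh in Ht. apply lt_IZR. rewrite mult_IZR. simpl. lra. }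
  assert (HinL : forall x, condL x -> In x L).
  { intros x Hx. unfold L. apply filter_In. split; [|apply (proj2 (Pb_true _)); auto].
    destruct Hx as [[Ha Hb] Ht]. apply Hcoord; auto. pose proof (HA3 x Hb Ht). lia. }
  assert (HLc : forall x, In x L -> condL x).
  { intros x Hx. unfold L in Hx. apply filter_In in Hx. apply (proj1 (Pb_true _)). tauto. }
  assert (HdepL : forall x, In x L -> exists X, In X U /\ forall y, In y X ->
      Rset (sadd 2 x y) \/ (In (sadd 2 x y) L /\ Th' (sadd 2 x y) < Th' x)).
  { intros x Hx. destruct (HLc x Hx) as [[Ha Hb] Ht].
    destruct (band_rule U w1 w2 Mz HM HAB XT XB HXT HXB HXTp HXBp h Hh Hlam x Hb) as [X [HX HXv]].
    exists X; split; auto. intros y Hy. destruct (HXv y Hy) as [Hr' Hv].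
    pose proof (Th_step w1 w2 Mz HM h Hh x y Hv) as Hlt. fold Th' in Hlt.
    destruct (HAB X y HX Hy) as [HAy _].
    assert (EA : A (sadd 2 x y) = (A x + A y)%Z) by apply Az_add.
    assert (EB : B (sadd 2 x y) = (B x + B y)%Z) by apply Bz_add.
    destruct (Z_lt_le_dec (A x + A y) Q).
    - left. unfold Rset. rewrite EA, EB. unfold A, B, H0 in *. lia.
    - right. split; auto. apply HinL. unfold condL. rewrite EA, EB. split; [unfold A, B, H0 in *; lia|lra]. }
  set (u := mkv (IZR w1 / r) (IZR w2 / r)).
  set (up' := mkv (- IZR w2 / r) (IZR w1 / r)).
  set (z := mks (kk * w1) (kk * w2)).
  assert (HAz : A z = Q) by (unfold A, Az, z, Q, n2; rewrite mks1, mks2; ring).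
  assert (HBz : B z = 0%Z) by (unfold B, Bz, z; rewrite mks1, mks2; ring).
  exists u, (IZR kk * r), z, Rset, (concat (repeat L (length L))).
  split.
  { unfold unit_vec. rewrite dot2. unfold u. rewrite mkv1, mkv2.
    replace (IZR w1 / r * (IZR w1 / r) + IZR w2 / r * (IZR w2 / r)) with (IZR n2 / (r * r)) by (rewrite Hn2e; field; lra).
    rewrite Hrr. field; lra. }
  split; [apply Rmult_lt_0_compat; [apply IZR_lt; lia|lra]|].
  split.
  { intro i. destruct (fin2 i) as [->| ->]; unfold toR, u, z; rewrite ?mkv1, ?mkv2, ?mks1, ?mks2, mult_IZR; field; lra. }
  split.
  { split; [intro E; discriminate E|]. intros _.
    exists up', (IZR H0 / r). split; [|split; [|split]].
    - unfold unit_vec. rewrite dot2. unfold up'. rewrite mkv1, mkv2.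
      replace (- IZR w2 / r * (- IZR w2 / r) + IZR w1 / r * (IZR w1 / r)) with (IZR n2 / (r * r)) by (rewrite Hn2e; field; lra).
      rewrite Hrr. field; lra.
    - rewrite dot2. unfold u, up'. rewrite !mkv1, !mkv2. field; lra.
    - apply Rdiv_le_0_compat; lra.
    - intros x. unfold Rset. split.
      + intros [[Ha1 Ha2] [Hb1 Hb2]].
        exists (IZR (A x) / r), (IZR (B x) / r).
        apply IZR_le in Ha1, Hb1, Hb2. apply IZR_lt in Ha2.
        assert (EQ : IZR Q = IZR kk * (r * r)) by (unfold Q; rewrite mult_IZR, Hrr; ring).
        split; [split|split; [split|]].
        * apply Rdiv_le_0_compat; lra.
        * apply (Rmult_lt_reg_r r); [lra|]. replace (IZR (A x) / r * r) with (IZR (A x)) by (field; lra). nra.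
        * apply Rdiv_le_0_compat; lra.
        * apply Rmult_le_compat_r; [left; apply Rinv_0_lt_compat; lra| lra].
        * assert (E1 : IZR n2 * IZR (x f1) = IZR (A x) * IZR w1 - IZR (B x) * IZR w2).
          { rewrite <- !mult_IZR, <- minus_IZR. f_equal. unfold n2, A, B, Az, Bz. ring. }
          assert (E2 : IZR n2 * IZR (x f2) = IZR (A x) * IZR w2 + IZR (B x) * IZR w1).
          { rewrite <- !mult_IZR, <- plus_IZR. f_equal. unfold n2, A, B, Az, Bz. ring. }
          intro i. destruct (fin2 i) as [->| ->]; unfold toR, u, up'; rewrite ?mkv1, ?mkv2.
          -- apply (Rmult_eq_reg_l (IZR n2)); [|lra]. rewrite E1, <- Hrr. field; lra.
          -- apply (Rmult_eq_reg_l (IZR n2)); [|lra]. rewrite E2, <- Hrr. field; lra.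
      + intros [t [s [[Ht1 Ht2] [[Hs1 Hs2] Hx]]]].
        pose proof (Hx f1) as X1. pose proof (Hx f2) as X2. unfold toR, u, up' in X1, X2.
        rewrite !mkv1 in X1. rewrite !mkv2 in X2.
        assert (EA : IZR (A x) = t * r).
        { unfold A, Az. rewrite plus_IZR, !mult_IZR, X1, X2.
          apply (Rmult_eq_reg_l r); [|lra].
          transitivity (t * IZR n2); [rewrite Hn2e; field; lra | rewrite <- Hrr; ring]. }
        assert (EB : IZR (B x) = s * r).
        { unfold B, Bz. rewrite plus_IZR, !mult_IZR, opp_IZR, X1, X2.
          apply (Rmult_eq_reg_l r); [|lra].
          transitivity (s * IZR n2); [rewrite Hn2e; field; lra | rewrite <- Hrr; ring]. }
        assert (EQ : IZR Q = IZR kk * (r * r)) by (unfold Q; rewrite mult_IZR, Hrr; ring).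
        assert (HsH : s * r <= IZR H0).
        { apply (Rmult_le_compat_r r) in Hs2; [|lra]. replace (IZR H0 / r * r) with (IZR H0) in Hs2 by (field; lra). lra. }
        split; split.
        * apply le_IZR. rewrite EA. simpl. nra.
        * apply lt_IZR. rewrite EA, EQ. nra.
        * apply le_IZR. rewrite EB. simpl. nra.
        * apply le_IZR. rewrite EB. lra. }
  split.
  { exists (mks 0 0). unfold Rset, A, B, Az, Bz. rewrite mks1, mks2. lia. }
  split.
  { intros x Hx. apply in_concat in Hx. destruct Hx as [l' [Hl' Hx]].
    apply repeat_spec in Hl'. subst l'. destruct (HLc x Hx) as [[Ha Hb] Ht].
    pose proof (HA3 x Hb Ht) as Ha3.
    destruct (Z_lt_le_dec (A x) (2 * Q)).
    - exists (mks (x f1 - kk * w1) (x f2 - kk * w2)). split.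
      + unfold Rset, A, B, Az, Bz in *. rewrite mks1, mks2. unfold Q, n2 in *. nia.
      + left. apply site2_ext; unfold sadd, z; rewrite ?mks1, ?mks2; ring.
    - exists (mks (x f1 - 2 * (kk * w1)) (x f2 - 2 * (kk * w2))). split.
      + unfold Rset, A, B, Az, Bz in *. rewrite mks1, mks2. unfold Q, n2 in *. nia.
      + right. apply site2_ext; unfold sadd, sscale, z; rewrite ?mks1, ?mks2; ring. }
  intros P0 P1 eta Hk s ts Hlen Hincr HF HR0 HP1 y Hy.
  apply (dyn_main 2 U P0 P1 eta Hk Rset L Th' HdepL s ts Hincr HF HR0 HP1).
  apply HinL. unfold condL. destruct Hy as [[Ha1 Ha2] [Hb1 Hb2]].
  assert (EA : A (sadd 2 z y) = (A z + A y)%Z) by apply Az_add.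
  assert (EB : B (sadd 2 z y) = (B z + B y)%Z) by apply Bz_add.
  rewrite EA, EB, HAz, HBz. split; [lia|].
  assert (Hb : (0 <= B (sadd 2 z y) <= H0)%Z) by (rewrite EB, HBz; lia).
  pose proof (G_bounds Mz HM h Hh (B (sadd 2 z y)) Hb) as [Gl Gu]. fold G in Gl, Gu.
  rewrite HTh, EA, HAz. rewrite plus_IZR.
  assert (IZR (A y) < IZR Q) by (apply IZR_lt; lia). lra.
Qed.


Theorem mainTheorem9 (d : nat) (Hd : d = 1%nat \/ d = 2%nat)
    (U : list (list (site d))) (HU : update_family d U)
    (Hsc : supercritical d U) :
  exists (u : vec d) (a1 : R) (z : site d) (Rset : site d -> Prop)
         (xs : list (site d)),
    unit_vec d u /\ 0 < a1 /\
    (* z = a1 u, which lies in Z^d *)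
    (forall i, toR d z i = a1 * u i) /\
    R_shape d u a1 Rset /\
    (exists y, Rset y) /\
    (forall x, In x xs ->
       exists y, Rset y /\ (x = sadd d z y \/ x = sadd d (sscale d 2 z) y)) /\
    forall (P0 P1 : clocks d) (eta : trajectory d),
      harris_kcm d U P0 P1 eta ->
      forall (s : R) (ts : list R),
        length ts = length xs ->
        incr_from s ts ->
        Forall2 (fun x t => P0 x t) xs ts ->
        (forall y, Rset y -> eta s y = Zero) ->
        (forall x r, (Rset x \/ In x xs) -> s < r <= last ts s -> ~ P1 x r) ->
        forall y, Rset y -> eta (last ts s) (sadd d z y) = Zero.
Proof.
  destruct Hd as [-> | ->].
  - exact (main1 U HU Hsc).
  - exact (main2 U HU Hsc).
Qed.
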